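(* Let $R>0$, $t\neq 0$, $c=\frac{1-t^2}{1+t^2}$, $s=\frac{2t}{1+t^2}$, and set $k=0$. Consider the trisector $$T=\{(x,y,z)\in\mathbb{R}^3:\ y^2-(xs-yc)^2+2z-1=0,\ \bigl(x^2+R^2\bigr)^2-4R^2(x^2+y^2)=0\}.$$ Then this degree-eight trisector is reducible and splits into two algebraic space curves of degree four. These two quartic components intersect in exactly two real affine points, $$\Bigl(R,0,\tfrac{1+R^2s^2}{2}\Bigr)\quad\text{and}\quad\Bigl(-R,0,\tfrac{1+R^2s^2}{2}\Bigr),$$ and each of these two points is an ordinary real node of the trisector.
   Context: This is the trisector at parameter value $k=0$ of the $x$-axis, the line through $(0,0,1)$ with direction $(c,s,0)$, and the circle of radius $R$ centered at $(0,0,k)$ in the plane $z=k$ (with line–circle bisector $(x^2-2kz+R^2+k^2)^2-4R^2(x^2+y^2)=0$). An ordinary real node is a point where the curve is locally the union of two smooth branches with distinct tangent lines. *)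

(* Defs.v *)
From Stdlib Require Import Reals.
From Coquelicot Require Import Coquelicot.
Open Scope R_scope.

Definition pt := (R * R * R)%type.

Definition cpar (t : R) : R := (1 - t ^ 2) / (1 + t ^ 2).
Definition spar (t : R) : R := 2 * t / (1 + t ^ 2).

Definition trisector (Rad t : R) (P : pt) : Prop :=
  let '(x, y, z) := P in
  y ^ 2 - (x * spar t - y * cpar t) ^ 2 + 2 * z - 1 = 0 /\
  (x ^ 2 + Rad ^ 2) ^ 2 - 4 * Rad ^ 2 * (x ^ 2 + y ^ 2) = 0.

(* An algebraic space curve of degree four given as the graph over the
   x-axis of a polynomial map x |-> (p(x), q(x)) with max(deg p, deg q) = 4
   (a proper polynomial parametrization; a generic plane meets it in 4 points). *)
Definition quartic_graph_curve (C : pt -> Prop) : Prop :=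
  exists a b : nat -> R,
    (a 4%nat <> 0 \/ b 4%nat <> 0) /\
    forall x y z, C (x, y, z) <->
      (y = sum_f_R0 (fun i => a i * x ^ i) 4 /\
       z = sum_f_R0 (fun i => b i * x ^ i) 4).

Definition smooth_fun (f : R -> R) : Prop := forall (n : nat) (u : R), ex_derive_n f n u.

Definition curve_pt (g1 g2 g3 : R -> R) (u : R) : pt := (g1 u, g2 u, g3 u).

Definition smooth_branch (P : pt) (g1 g2 g3 : R -> R) (d : R) : Prop :=
  smooth_fun g1 /\ smooth_fun g2 /\ smooth_fun g3 /\
  curve_pt g1 g2 g3 0 = P /\
  (forall u, -d < u < d ->
     (Derive g1 u, Derive g2 u, Derive g3 u) <> (0, 0, 0)) /\
  (forall u v, -d < u < d -> -d < v < d ->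
     curve_pt g1 g2 g3 u = curve_pt g1 g2 g3 v -> u = v).

Definition not_parallel (v w : pt) : Prop :=
  let '(v1, v2, v3) := v in
  let '(w1, w2, w3) := w in
  (v2 * w3 - v3 * w2, v3 * w1 - v1 * w3, v1 * w2 - v2 * w1) <> (0, 0, 0).

Definition dist2 (P Q : pt) : R :=
  let '(p1, p2, p3) := P in
  let '(q1, q2, q3) := Q in
  (p1 - q1) ^ 2 + (p2 - q2) ^ 2 + (p3 - q3) ^ 2.

Definition ordinary_real_node (S : pt -> Prop) (P : pt) : Prop :=
  exists (eps d : R) (f1 f2 f3 g1 g2 g3 : R -> R),
    0 < eps /\ 0 < d /\
    smooth_branch P f1 f2 f3 d /\ smooth_branch P g1 g2 g3 d /\
    not_parallel (Derive f1 0, Derive f2 0, Derive f3 0)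
                 (Derive g1 0, Derive g2 0, Derive g3 0) /\
    forall Q, dist2 Q P < eps ^ 2 ->
      (S Q <-> ((exists u, -d < u < d /\ Q = curve_pt f1 f2 f3 u) \/
                (exists u, -d < u < d /\ Q = curve_pt g1 g2 g3 u))).

(* Main.v *)
Require Import Defs.
From Stdlib Require Import Reals Lra Psatz FunctionalExtensionality.
From Coquelicot Require Import Coquelicot.
Open Scope R_scope.

Definition p4 (a : R*R*R*R*R) (x:R) : R :=
  let '(a0,a1,a2,a3,a4) := a in a0 + a1*x + a2*x^2 + a3*x^3 + a4*x^4.
Definition D4 (a : R*R*R*R*R) : R*R*R*R*R :=
  let '(a0,a1,a2,a3,a4) := a in (a1, 2*a2, 3*a3, 4*a4, 0).

Lemma p4_deriv a c0 u : is_derive (fun u => p4 a (c0+u)) u (p4 (D4 a) (c0+u)).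
Proof. destruct a as [[[[a0 a1] a2] a3] a4]; unfold p4, D4. auto_derive; auto; ring. Qed.

Lemma family_smooth (F : nat -> R -> R) :
  (forall n u, is_derive (F n) u (F (S n) u)) -> smooth_fun (F 0%nat).
Proof.
  intros HF.
  assert (E : forall n y, Derive_n (F 0%nat) n y = F n y).
  { induction n; intros y; [reflexivity|].
    simpl. rewrite (Derive_ext _ (F n) y IHn). apply is_derive_unique, HF. }
  intros n u. destruct n; [exact I|]. simpl.
  apply (ex_derive_ext (F n)). { intros; symmetry; apply E. }
  exists (F (S n) u). apply HF.
Qed.

Lemma smooth_p4 a x0 (g : R -> R) : (forall u, g u = p4 a (x0+u)) -> smooth_fun g.
Proof.
  intros H. replace g with (fun u => p4 (Nat.iter 0 D4 a) (x0+u)).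
  2:{ apply functional_extensionality; intros; rewrite H; reflexivity. }
  apply (family_smooth (fun n u => p4 (Nat.iter n D4 a) (x0+u))).
  intros n u. simpl. apply p4_deriv.
Qed.

Definition Yf (Rad s x : R) := s * (x^2 - Rad^2) / (2*Rad).
Definition Zf (Rad t s x : R) :=
  (1 - Yf Rad s x ^2 + (x * spar t - Yf Rad s x * cpar t)^2)/2.
Definition Cc Rad t s (P:pt) : Prop :=
  let '(x,y,z) := P in y = Yf Rad s x /\ z = Zf Rad t s x.

Lemma trisector_iff Rad t x y z : 0 < Rad ->
  trisector Rad t (x,y,z) <-> Cc Rad t 1 (x,y,z) \/ Cc Rad t (-1) (x,y,z).
Proof.
  intros HR. unfold trisector, Cc. split.
  - intros [H1 H2].
    assert (H : (2*Rad*y - (x^2-Rad^2)) * (2*Rad*y + (x^2-Rad^2)) = 0).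
    { replace ((2*Rad*y - (x^2-Rad^2)) * (2*Rad*y + (x^2-Rad^2)))
        with (-((x ^ 2 + Rad ^ 2) ^ 2 - 4 * Rad ^ 2 * (x ^ 2 + y ^ 2))) by ring.
      rewrite H2; ring. }
    destruct (Rmult_integral _ _ H) as [H3|H3].
    + left. assert (Hy : y = Yf Rad 1 x) by (unfold Yf; field_simplify_eq; lra).
      split; [exact Hy|]. subst y. unfold Zf. lra.
    + right. assert (Hy : y = Yf Rad (-1) x) by (unfold Yf; field_simplify_eq; lra).
      split; [exact Hy|]. subst y. unfold Zf. lra.
  - intros [[Hy Hz]|[Hy Hz]]; subst y z; unfold Zf, Yf; split; try field; try lra;
      field_simplify; try lra; nra.
Qed.

Lemma cs_id t : cpar t ^ 2 - 1 = - (spar t)^2.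
Proof. unfold cpar, spar. assert (0 < 1 + t^2) by nra. field. lra. Qed.

Lemma spar_nz t : t <> 0 -> spar t <> 0.
Proof.
  intros Ht. unfold spar. assert (0 < 1 + t^2) by nra.
  intro H1.
  apply Ht. apply (Rmult_eq_reg_r (/(1+t^2))).
  2:{ apply Rinv_neq_0_compat; lra. } lra.
Qed.

Lemma quartic_Cc Rad t s : 0 < Rad -> t <> 0 -> s <> 0 -> quartic_graph_curve (Cc Rad t s).
Proof.
  intros HR Ht Hs.
  set (e := s/(2*Rad)). set (c := cpar t). set (sp := spar t).
  exists (fun i => match i with 0%nat => - s * Rad / 2 | 2%nat => s/(2*Rad) | _ => 0 end).
  exists (fun i => match i with
                   | 0%nat => (1 - e^2*Rad^4 + e^2*c^2*Rad^4)/2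
                   | 1%nat => e*c*sp*Rad^2
                   | 2%nat => sp^2/2 - e^2*c^2*Rad^2 + e^2*Rad^2
                   | 3%nat => - e*c*sp
                   | 4%nat => e^2*(c^2-1)/2
                   | _ => 0 end).
  split.
  - right. intro H9. cbv beta iota in H9. unfold c in H9. rewrite cs_id in H9. fold sp in H9.
    assert (e <> 0) by (unfold e; apply Rmult_integral_contrapositive; split;
      [exact Hs | apply Rinv_neq_0_compat; lra]).
    pose proof (spar_nz t Ht) as Hsp. fold sp in Hsp.
    assert (H2 : e^2 * sp^2 = 0) by lra.
    apply Rmult_integral in H2; destruct H2 as [H2|H2]; revert H2; apply pow_nonzero; assumption.
  - intros x y z. simpl sum_f_R0. unfold Cc.
    subst e c sp.
    split; intros [H1 H2]; subst y z; split; unfold Zf, Yf; field; lra.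
Qed.

Lemma D_lin x0 u : Derive (fun u => x0 + u) u = 1.
Proof. apply is_derive_unique. auto_derive; auto; ring. Qed.

Lemma D_Y Rad s x0 : 0 < Rad -> Derive (fun u => Yf Rad s (x0 + u)) 0 = s * x0 / Rad.
Proof. intros HR. apply is_derive_unique. unfold Yf. auto_derive; auto. field. lra. Qed.

Lemma branch_ok Rad t s x0 : 0 < Rad -> x0 ^ 2 = Rad ^ 2 ->
  smooth_branch (x0, 0, (1 + Rad ^ 2 * spar t ^ 2) / 2)
    (fun u => x0 + u) (fun u => Yf Rad s (x0 + u)) (fun u => Zf Rad t s (x0 + u)) 1.
Proof.
  intros HR Hx.
  assert (Y0 : Yf Rad s x0 = 0) by (unfold Yf; rewrite Hx; field; lra).
  split; [|split; [|split; [|split; [|split]]]].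
  - apply (smooth_p4 (0,1,0,0,0) x0). intros; unfold p4; ring.
  - apply (smooth_p4 (- s * Rad / 2, 0, s/(2*Rad), 0, 0) x0).
    intros; unfold p4, Yf; field; lra.
  - set (e := s/(2*Rad)). set (c := cpar t). set (sp := spar t).
    apply (smooth_p4 ((1 - e^2*Rad^4 + e^2*c^2*Rad^4)/2, e*c*sp*Rad^2,
             sp^2/2 - e^2*c^2*Rad^2 + e^2*Rad^2, - e*c*sp, e^2*(c^2-1)/2) x0).
    intros; unfold p4, Zf, Yf; subst e c sp; field; lra.
  - unfold curve_pt. rewrite Rplus_0_r, Y0. unfold Zf. rewrite Y0.
    f_equal. rewrite <- Hx. field.
  - intros u Hu H. injection H. intros _ _ H1. rewrite (D_lin x0 u) in H1. lra.
  - intros u v Hu Hv H. unfold curve_pt in H. injection H. intros. lra.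
Qed.

Lemma node_ok Rad t x0 : 0 < Rad -> x0 ^ 2 = Rad ^ 2 ->
  ordinary_real_node (trisector Rad t) (x0, 0, (1 + Rad ^ 2 * spar t ^ 2) / 2).
Proof.
  intros HR Hx.
  exists 1, 1, (fun u => x0 + u), (fun u => Yf Rad 1 (x0 + u)), (fun u => Zf Rad t 1 (x0 + u)),
    (fun u => x0 + u), (fun u => Yf Rad (-1) (x0 + u)), (fun u => Zf Rad t (-1) (x0 + u)).
  split; [lra|]. split; [lra|].
  split; [apply branch_ok; auto|]. split; [apply branch_ok; auto|].
  split.
  - unfold not_parallel. rewrite !D_lin, !D_Y by exact HR. intro H.
    injection H. intros H3 H2 H1.
    assert (x0 = 0).
    { apply (Rmult_eq_reg_r (/Rad)); [|apply Rinv_neq_0_compat; lra]. lra. }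
    subst x0. nra.
  - intros [[x y] z] Hd. unfold dist2 in Hd.
    assert (H0 : (x - x0)^2 < 1).
    { revert Hd. generalize (pow2_ge_0 (y - 0)) (pow2_ge_0 (z - (1 + Rad ^ 2 * spar t ^ 2) / 2)).
      intros. lra. }
    assert (Hu : -1 < x - x0 < 1) by nra.
    rewrite trisector_iff by exact HR. unfold Cc, curve_pt. split.
    + intros [[Hy Hz]|[Hy Hz]]; subst y z; [left|right]; exists (x - x0); split; auto;
        replace (x0 + (x - x0)) with x by ring; reflexivity.
    + intros [[u [Hu' HQ]]|[u [Hu' HQ]]]; injection HQ; intros -> -> ->; [left|right]; auto.
Qed.

Theorem theorem7 (Rad t : R) :
  0 < Rad -> t <> 0 ->
  (exists C1 C2 : pt -> Prop,
     quartic_graph_curve C1 /\ quartic_graph_curve C2 /\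
     (forall P, trisector Rad t P <-> (C1 P \/ C2 P)) /\
     (forall P, (C1 P /\ C2 P) <->
        (P = (Rad, 0, (1 + Rad ^ 2 * spar t ^ 2) / 2) \/
         P = (- Rad, 0, (1 + Rad ^ 2 * spar t ^ 2) / 2)))) /\
  ordinary_real_node (trisector Rad t) (Rad, 0, (1 + Rad ^ 2 * spar t ^ 2) / 2) /\
  ordinary_real_node (trisector Rad t) (- Rad, 0, (1 + Rad ^ 2 * spar t ^ 2) / 2).
Proof.
  intros HR Ht.
  split; [|split; apply node_ok; auto; ring].
  exists (Cc Rad t 1), (Cc Rad t (-1)).
  split; [apply quartic_Cc; auto; lra|].
  split; [apply quartic_Cc; auto; lra|].
  split.
  - intros [[x y] z]. apply trisector_iff; exact HR.
  - intros [[x y] z]. unfold Cc. split.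
    + intros [[H1 H2] [H3 H4]].
      assert (Hx : x ^ 2 = Rad ^ 2).
      { assert (E : x^2 - Rad^2 = (Yf Rad 1 x - Yf Rad (-1) x) * Rad) by (unfold Yf; field; lra).
        rewrite <- H1, <- H3 in E. lra. }
      assert (Y0 : Yf Rad 1 x = 0) by (unfold Yf; rewrite Hx; field; lra).
      assert (Hz : z = (1 + Rad ^ 2 * spar t ^ 2) / 2).
      { rewrite H2. unfold Zf. rewrite Y0, <- Hx. field. }
      rewrite Y0 in H1. subst y z.
      assert (Hxx : (x - Rad) * (x + Rad) = 0) by nra.
      destruct (Rmult_integral _ _ Hxx); [left|right]; f_equal; f_equal; lra.
    + assert (Y0 : forall s x, x ^ 2 = Rad ^ 2 -> Yf Rad s x = 0)
        by (intros s x0 Hx0; unfold Yf; rewrite Hx0; field; lra).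
      assert (Z0 : forall s x, x ^ 2 = Rad ^ 2 -> Zf Rad t s x = (1 + Rad ^ 2 * spar t ^ 2) / 2)
        by (intros s x0 Hx0; unfold Zf; rewrite Y0 by exact Hx0; rewrite <- Hx0; field).
      intros [H|H]; injection H; intros -> -> ->;
        rewrite ?Y0, ?Z0 by ring; repeat split; reflexivity.
Qed.
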